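(* Let $n\ge 1$ and let $\tau\in \mathrm{RT}(n)$. In dimension $d=1$ one has $F(\tau)=G(\pi(\tau))$, i.e. for all $f_1,\dots,f_n\in C^\infty(\mathbb{R},\mathbb{R})$, $$F(\tau)(f_1,\dots,f_n)=f_1^{(\varphi_\tau(1))}\cdots f_n^{(\varphi_\tau(n))},$$ where $\varphi_\tau(v)$ is the number of children of the vertex $v$ in $\tau$.
   Context: A rooted tree on a finite vertex set $V\subset\mathbb{N}$ is a set $E$ of ordered pairs of elements of $V$ (an edge $(v,w)$ means $w$ is a child of $v$) such that exactly one vertex $r$ (the root) has no parent, every other vertex $w$ has exactly one parent (exactly one $v$ with $(v,w)\in E$), and every vertex is connected to the root by following parents. $C_v=\{w:(v,w)\in E\}$ is the set of children of $v$; for $v\in V$, $\tau_v$ is the subtree consisting of $v$ and all vertices above it (descendants), with the induced edges. $\mathrm{RT}(n)$ is the set of rooted trees with vertex set $[n]=\{1,\dots,n\}$. Elementary differentials: let $\mathcal{C}_d=C^\infty(\mathbb{R}^d,\mathbb{R}^d)$, $g_j$ the $j$-th coordinate of $g$, $\partial_j=\partial/\partial x_j$. For a rooted tree $\tau$ on $V$ with root $r$ whose children are $v_1,\dots,v_k$, and for $f^i\in\mathcal{C}_d$ ($i\in V$), define recursively $$F(\tau)((f^i)_{i\in V})=\sum_{j_1,\dots,j_k=1}^d F(\tau_{v_1})((f^i)_{i\in V(\tau_{v_1})})_{j_1}\cdots F(\tau_{v_k})((f^i)_{i\in V(\tau_{v_k})})_{j_k}\,\partial_{j_1}\cdots\partial_{j_k}f^r$$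 (for a single vertex, $F(\tau)=f^r$). For $d=1$ this is an $n$-linear map $C^\infty(\mathbb{R},\mathbb{R})^n\to C^\infty(\mathbb{R},\mathbb{R})$. A multi-index on $[n]$ is a map $\varphi:[n]\to\mathbb{N}$ with $\sum_{v}\varphi(v)=n-1$; $\mathrm{MI}(n)$ is the set of these. The map $\pi:\mathrm{RT}(n)\to\mathrm{MI}(n)$ sends $\tau$ to $\varphi_\tau$, $\varphi_\tau(v)=|C_v|$. For $\varphi\in\mathrm{MI}(n)$, $G(\varphi)(f_1,\dots,f_n)=f_1^{(\varphi(1))}\cdots f_n^{(\varphi(n))}$, where $f^{(k)}$ is the $k$-th derivative. *)

(* Defs.v *)
From Stdlib Require Import Reals.
From Coquelicot Require Import Coquelicot.
From mathcomp Require Import all_boot.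

Set Implicit Arguments.
Unset Strict Implicit.
Unset Printing Implicit Defensive.

(* Vertex set [n] = {1,...,n} is represented by 'I_n = {0,...,n-1}
   (vertex i : 'I_n stands for the paper's vertex i+1).
   A set of edges E : {set 'I_n * 'I_n}; (v,w) \in E means w is a child of v. *)

Definition parents n (E : {set 'I_n * 'I_n}) (w : 'I_n) : {set 'I_n} :=
  [set v | (v, w) \in E].

Definition children n (E : {set 'I_n * 'I_n}) (v : 'I_n) : {set 'I_n} :=
  [set w | (v, w) \in E].

Definition parent_rel n (E : {set 'I_n * 'I_n}) : rel 'I_n :=
  fun a b => (b, a) \in E.

Definition is_root n (E : {set 'I_n * 'I_n}) (r : 'I_n) : Prop :=
  #|parents E r| = 0%N.

Definition rooted_tree n (E : {set 'I_n * 'I_n}) : Prop :=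
  (exists r, is_root E r /\ forall r', is_root E r' -> r' = r) /\
  (forall w, ~ is_root E w -> #|parents E w| = 1%N) /\
  (forall w r, is_root E r -> connect (parent_rel E) w r).

Definition root_of n (E : {set 'I_n * 'I_n}) : option 'I_n :=
  [pick r | #|parents E r| == 0%N].

(* Elementary differential in dimension d = 1.  For d = 1 the sums over
   j_1..j_k in the recursive definition have a single term and
   d_{j_1}...d_{j_k} f^r is the k-th derivative of f^r, so
     F(tau_v)(f)(x) = (prod_{w in C_v} F(tau_w)(f)(x)) * (f^v)^{(|C_v|)}(x).
   The recursion on subtrees is implemented with a fuel argument; the depth
   of a tree on n vertices is < n, so fuel n suffices. *)
Fixpoint F_sub (fuel : nat) n (E : {set 'I_n * 'I_n}) (f : 'I_n -> R -> R)
  (v : 'I_n) (x : R) : R :=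
  match fuel with
  | O => R0
  | S k => Rmult (\big[Rmult/R1]_(w in children E v) F_sub k E f w x)
                 (Derive_n (f v) #|children E v| x)
  end.

Definition F_tree n (E : {set 'I_n * 'I_n}) (f : 'I_n -> R -> R) : R -> R :=
  match root_of E with
  | Some r => F_sub n E f r
  | None => fun _ => R0
  end.

Definition multi_index n (phi : 'I_n -> nat) : Prop :=
  (\sum_(v < n) phi v)%N = n.-1.

Definition pi_tree n (E : {set 'I_n * 'I_n}) : 'I_n -> nat :=
  fun v => #|children E v|.

Definition G_mi n (phi : 'I_n -> nat) (f : 'I_n -> R -> R) : R -> R :=
  fun x => \big[Rmult/R1]_(i < n) Derive_n (f i) (phi i) x.

Definition smooth (g : R -> R) : Prop :=
  forall k x, ex_derive_n g k x.

(* Main.v *)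
Require Import Defs.
From Stdlib Require Import Reals.
From Coquelicot Require Import Coquelicot.
From mathcomp Require Import all_boot.
From HB Require Import structures.
From Stdlib Require Import FunctionalExtensionality.

Set Implicit Arguments.
Unset Strict Implicit.
Unset Printing Implicit Defensive.

HB.instance Definition _ := Monoid.isComLaw.Build R R1 Rmult (fun a b c => esym (Rmult_assoc a b c)) Rmult_comm Rmult_1_l.

Definition par n (E : {set 'I_n * 'I_n}) (w : 'I_n) : 'I_n :=
  odflt w [pick v | (v, w) \in E].

Lemma par_edge n (E : {set 'I_n * 'I_n}) (r0 : 'I_n)
  (hone : forall w, w != r0 -> #|parents E w| = 1%N) w :
  w != r0 -> (par E w, w) \in E.
Proof.
move=> /hone /eqP /cards1P [x Hx]; rewrite /par.
case: pickP => [u Hu|Hn] //=.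
have : x \in parents E w by rewrite Hx set11.
by rewrite inE Hn.
Qed.

Lemma par_spec n (E : {set 'I_n * 'I_n}) (r0 : 'I_n)
  (hroot : #|parents E r0| = 0%N)
  (hone : forall w, w != r0 -> #|parents E w| = 1%N) v c :
  (v, c) \in E -> par E c = v.
Proof.
move=> Hvc.
have Hc : c != r0.
  apply/negP => /eqP Hc; subst c.
  have : (0 < #|parents E r0|)%N.
    by rewrite card_gt0; apply/set0Pn; exists v; rewrite inE.
  by rewrite hroot.
move: (hone _ Hc) => /eqP /cards1P [x Hx].
have Hv : v \in parents E c by rewrite inE.
have Hp : par E c \in parents E c by rewrite inE (par_edge hone Hc).
by move: Hv Hp; rewrite Hx !inE => /eqP -> /eqP ->.
Qed.

Lemma iter_path n (E : {set 'I_n * 'I_n}) (r0 : 'I_n)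
  (hroot : #|parents E r0| = 0%N)
  (hone : forall w, w != r0 -> #|parents E w| = 1%N) s w :
  path (parent_rel E) w s -> iter (size s) (par E) w = last w s.
Proof.
elim: s w => [|b s IH] w //= /andP [Hb Hs].
by rewrite -iterS iterSr (par_spec hroot hone Hb) IH.
Qed.

From mathcomp Require Import zify.

Definition depth n (E : {set 'I_n * 'I_n}) (r0 : 'I_n)
  (hex : forall w, exists k, iter k (par E) w == r0) (w : 'I_n) : nat :=
  ex_minn (hex w).

Lemma depth_spec n (E : {set 'I_n * 'I_n}) (r0 : 'I_n) hex w :
  iter (@depth n E r0 hex w) (par E) w = r0 /\
  forall m, iter m (par E) w = r0 -> (depth hex w <= m)%N.
Proof.
rewrite /depth; case: ex_minnP => m /eqP Hm Hmin; split => // k Hk.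
by apply: Hmin; apply/eqP.
Qed.

Lemma depth_r0 n (E : {set 'I_n * 'I_n}) (r0 : 'I_n) hex :
  @depth n E r0 hex r0 = 0%N.
Proof. by have [_ H] := depth_spec hex r0; apply/eqP; rewrite -leqn0; apply: H. Qed.

Lemma depth_par n (E : {set 'I_n * 'I_n}) (r0 : 'I_n) hex w :
  w != r0 -> @depth n E r0 hex w = (depth hex (par E w)).+1.
Proof.
move=> Hw.
have [H1 H2] := depth_spec hex w.
have [H3 H4] := depth_spec hex (par E w).
apply/eqP; rewrite eqn_leq; apply/andP; split.
  by apply: H2; rewrite iterSr.
move: H1 H2; case: (depth hex w) => [|k] /= H1 H2.
  by rewrite H1 eqxx in Hw.
by rewrite ltnS; apply: H4; rewrite -iterSr.
Qed.

Lemma iter_ne_r0 n (E : {set 'I_n * 'I_n}) (r0 : 'I_n) hex w j :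
  (j < @depth n E r0 hex w)%N -> iter j (par E) w != r0.
Proof.
move=> Hj; apply/eqP => H.
have [_ H2] := depth_spec hex w.
by have := H2 _ H; rewrite leqNgt Hj.
Qed.

Lemma depth_iter n (E : {set 'I_n * 'I_n}) (r0 : 'I_n) hex w j :
  (j <= @depth n E r0 hex w)%N -> depth hex (iter j (par E) w) = (depth hex w - j)%N.
Proof.
elim: j => [|j IH] Hj; first by rewrite subn0.
have Hne := iter_ne_r0 Hj.
have := depth_par hex Hne; rewrite IH ?(ltnW Hj) // iterS => H.
lia.
Qed.

Lemma depth_lt n (E : {set 'I_n * 'I_n}) (r0 : 'I_n) hex w :
  (@depth n E r0 hex w < n)%N.
Proof.
set d := depth hex w.
have [H1 H2] := depth_spec hex w.
pose g := fun i : 'I_d.+1 => iter i (par E) w.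
have inj : injective g.
  have key : forall i j : 'I_d.+1, (i < j)%N -> g i = g j -> False.
    move=> i j Hij Heq.
    have Hjd : (j <= d)%N by rewrite -ltnS.
    have : iter (d - j + i) (par E) w = r0.
      rewrite iterD -/(g i) Heq /g -iterD subnK //.
    move/H2; rewrite -/d; lia.
  move=> i j Heq; case: (ltngtP i j) => H.
  - by case: (key _ _ H Heq).
  - by case: (key _ _ H (esym Heq)).
  - exact: val_inj.
by have := leq_card g inj; rewrite !card_ord.
Qed.

Definition desc n (E : {set 'I_n * 'I_n}) (r0 : 'I_n) hex (v : 'I_n) : {set 'I_n} :=
  [set w | (@depth n E r0 hex v <= depth hex w)%N &&
           (iter (depth hex w - depth hex v) (par E) w == v)].

Lemma F_sub_desc n (E : {set 'I_n * 'I_n}) (r0 : 'I_n)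
  (hroot : #|parents E r0| = 0%N)
  (hone : forall w, w != r0 -> #|parents E w| = 1%N) hex
  (f : 'I_n -> R -> R) x k v :
  (forall w, (@depth n E r0 hex w < depth hex v + k)%N) ->
  F_sub k E f v x =
  \big[Rmult/R1]_(w in desc hex v) Derive_n (f w) #|children E w| x.
Proof.
have dchild : forall v c, (v, c) \in E -> depth hex c = (depth hex v).+1.
  move=> v' c Hc.
  have Hcr : c != r0.
    apply/negP => /eqP Hc'; subst c.
    have : (0 < #|parents E r0|)%N.
      by rewrite card_gt0; apply/set0Pn; exists v'; rewrite inE.
    by rewrite hroot.
  by rewrite (depth_par hex Hcr) (par_spec hroot hone Hc).
elim: k v => [|k IH] v Hk.
  by have := Hk v; rewrite addn0 ltnn.
rewrite /=.
rewrite (eq_bigr (fun c => \big[Rmult/R1]_(w in desc hex c)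
                    Derive_n (f w) #|children E w| x)); last first.
  move=> c; rewrite inE => Hc; apply: IH => w.
  by rewrite (dchild _ _ Hc) addSnnS.
rewrite [RHS](bigD1 v) /=; last by rewrite inE leqnn subnn eqxx.
rewrite Rmult_comm; congr Rmult.
rewrite [RHS](partition_big (fun w => iter (depth hex w - depth hex v).-1 (par E) w)
           (fun j => j \in children E v)).
  apply: eq_bigr => c; rewrite inE => Hc; apply: eq_bigl => w.
  have Hdc := dchild _ _ Hc.
  rewrite !inE; apply/idP/idP.
    move=> /andP [H1 /eqP H2].
    have Hv : iter (depth hex w - depth hex v) (par E) w = v.
      have -> : (depth hex w - depth hex v = (depth hex w - depth hex c).+1)%N by lia.
      by rewrite iterS H2 (par_spec hroot hone Hc).
    rewrite Hv eqxx andbT.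
    have -> : ((depth hex w - depth hex v).-1 = depth hex w - depth hex c)%N by lia.
    rewrite H2 eqxx andbT.
    apply/andP; split; first by lia.
    by apply/eqP => Hw; subst w; lia.
  move=> /andP [/andP [/andP [H1 /eqP H2] Hne] /eqP H3].
  have Hpos : (depth hex w - depth hex v != 0)%N.
    by apply/eqP => H0; rewrite H0 /= in H2; rewrite H2 eqxx in Hne.
  have -> : (depth hex w - depth hex c = (depth hex w - depth hex v).-1)%N by lia.
  rewrite H3 eqxx andbT; lia.
move=> w /andP []; rewrite inE => /andP [H1 /eqP H2] Hne.
have Hpos : (depth hex w - depth hex v != 0)%N.
  by apply/eqP => H0; rewrite H0 /= in H2; rewrite H2 eqxx in Hne.
set a := iter _ (par E) w.
have Hpa : par E a = v.
  by rewrite /a -iterS prednK ?lt0n.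
have Hdw : (depth hex w <= depth hex w)%N by [].
have Ha : a != r0.
  apply/eqP => Ha.
  have : depth hex a = (depth hex w - (depth hex w - depth hex v).-1)%N.
    by rewrite /a depth_iter //; lia.
  rewrite Ha depth_r0; lia.
have := par_edge hone Ha; rewrite Hpa => H.
by rewrite inE.
Qed.

Theorem proposition2p6 (n : nat) (E : {set 'I_n * 'I_n}) :
  (1 <= n)%N -> rooted_tree E ->
  forall f : 'I_n -> R -> R, (forall i, smooth (f i)) ->
  F_tree E f = G_mi (pi_tree E) f.
Proof.
move=> _ [[r [hr hu]] [h1 h2]] f _.
rewrite /F_tree /root_of.
case: pickP => [r0 /eqP Hr0 | Hn]; last first.
  by have := Hn r; rewrite /is_root in hr; rewrite hr eqxx.
have Er : r0 = r by apply: hu.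
subst r0.
have hone : forall w, w != r -> #|parents E w| = 1%N.
  move=> w Hw; apply: h1 => Hroot; rewrite (hu _ Hroot) eqxx in Hw; done.
have hex : forall w, exists k, iter k (par E) w == r.
  move=> w; case/connectP: (h2 w r hr) => s Hp Hl.
  by exists (size s); rewrite (iter_path Hr0 hone Hp) -Hl.
apply: functional_extensionality => x.
rewrite (@F_sub_desc n E r Hr0 hone hex f x n r); last first.
  by move=> w; rewrite depth_r0 add0n depth_lt.
rewrite /G_mi /pi_tree.
apply: eq_bigl => w; rewrite inE depth_r0 subn0 /=.
by have [-> _] := depth_spec hex w; rewrite eqxx.
Qed.
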